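(* Let $G$ be a Hamiltonian graph which is not a complete graph of odd order. Then $G$ has an IPD.
   Context: All graphs are finite and simple. A graph of order $n$ is Hamiltonian if it contains a cycle of order $n$ (through all vertices). The order of a path is its number of vertices. A path $P$ in $G$ is induced if the subgraph of $G$ induced on $V(P)$ is exactly $P$. A graph $G$ has an IPD (induced path decomposition) if $V(G)$ can be partitioned into sets $V_1,\dots,V_t$ such that each $G[V_i]$ is a path of order at least $2$. *)

(* Defs.v *)
From mathcomp Require Import all_boot.
Set Implicit Arguments. Unset Strict Implicit. Unset Printing Implicit Defensive.

Definition simple_graph (T : finType) (e : rel T) : Prop :=
  symmetric e /\ irreflexive e.

Definition hamiltonian (T : finType) (e : rel T) : Prop :=
  exists s : seq T,
    [/\ uniq s, (forall x : T, x \in s), 3 <= size s & cycle e s].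

Definition complete_odd (T : finType) (e : rel T) : Prop :=
  (forall x y : T, x != y -> e x y) /\ odd #|T|.

Definition induced_path (T : finType) (e : rel T) (p : seq T) : Prop :=
  uniq p /\
  forall i j : nat, i < size p -> j < size p -> forall x0 : T,
    e (nth x0 p i) (nth x0 p j) = ((i == j.+1) || (j == i.+1)).

Definition has_IPD (T : finType) (e : rel T) : Prop :=
  exists P : seq (seq T),
    [/\ uniq (flatten P), (forall x : T, x \in flatten P) &
        (forall p, p \in P -> 2 <= size p /\ induced_path e p)].

(* Main.v *)
Require Import Defs.
From mathcomp Require Import all_boot.
From mathcomp Require Import zify.
Set Implicit Arguments. Unset Strict Implicit. Unset Printing Implicit Defensive.

Definition adj_ok (T : finType) (e : rel T) (p : seq T) : Prop :=
  forall i j : nat, i < size p -> j < size p -> forall x0 : T,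
    e (nth x0 p i) (nth x0 p j) = ((i == j.+1) || (j == i.+1)).

Definition good (T : finType) (e : rel T) (P : seq (seq T)) : Prop :=
  forall p, p \in P -> 2 <= size p /\ adj_ok e p.

Fixpoint pairs (T : Type) (s : seq T) : seq (seq T) :=
  match s with x :: y :: t => [:: x; y] :: pairs t | _ => [::] end.

Ltac perm_tac := apply/permP => ?; rewrite /= -?cats1 ?count_cat /= ?count_cat /=; repeat match goal with H : _ |- _ => clear H end; lia.

Lemma adj2 (T : finType) (e : rel T) x y : symmetric e -> irreflexive e ->
  e x y -> adj_ok e [:: x; y].
Proof.
move=> sym irr exy i j.
case: i => [|[|i]] //; case: j => [|[|j]] // _ _ x0 /=;
  by rewrite ?irr ?exy // sym.
Qed.

Lemma adj3 (T : finType) (e : rel T) a b c : symmetric e -> irreflexive e ->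
  e a b -> e b c -> ~~ e a c -> adj_ok e [:: a; b; c].
Proof.
move=> sym irr eab ebc eac i j.
case: i => [|[|[|i]]] //; case: j => [|[|[|j]]] // _ _ x0 /=;
  rewrite ?irr ?eab ?ebc ?(negbTE eac) //; rewrite sym ?eab ?ebc ?(negbTE eac) //.
Qed.

Lemma pairs_ok (T : finType) (e : rel T) : symmetric e -> irreflexive e ->
  forall s, sorted e s -> ~~ odd (size s) ->
  flatten (pairs s) = s /\ good e (pairs s).
Proof.
move=> sym irr s; have [n] := ubnP (size s); elim: n s => // n IH.
case=> [|x [|y t]] //= Hn Hs Ho; try by split => // p.
move/andP: Hs => [exy Hs].
rewrite negbK in Ho.
have [F G] := IH t ltac:(lia) (path_sorted Hs) Ho.
split; first by rewrite /= F.
move=> p; rewrite in_cons => /orP [/eqP -> | /G //].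
by split => //; apply: adj2.
Qed.

Lemma flatten_uniq_mem (T : eqType) (P : seq (seq T)) p :
  uniq (flatten P) -> p \in P -> uniq p.
Proof.
elim: P => // q P IH /=; rewrite cat_uniq in_cons => /and3P [Hq _ HP].
by case/orP => [/eqP -> | /IH]; auto.
Qed.

Lemma odd_main (T : finType) (e : rel T) : symmetric e -> irreflexive e ->
  forall n s, size s <= n -> odd (size s) -> uniq s -> cycle e s ->
  forall x y, x \in s -> y \in s -> x != y -> ~~ e x y ->
  exists P, perm_eq (flatten P) s /\ good e P.
Proof.
move=> sym irr; elim=> [|n IH] s Hn Ho Hu Hc x y Hx Hy Hxy Hexy.
  by move: Hx; case: s Hn Ho Hu Hc Hy.
move: Hn Ho Hu Hc Hy; case/splitPr: Hx => p1 p2 Hn Ho Hu Hc Hy.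
have Hperm : perm_eq (x :: (p2 ++ p1)) (p1 ++ x :: p2) by perm_tac.
suff : exists P, perm_eq (flatten P) (x :: (p2 ++ p1)) /\ good e P.
  by case=> P [HP HG]; exists P; split => //; apply: perm_trans HP Hperm.
have Hu' : uniq (x :: (p2 ++ p1)) by rewrite (perm_uniq Hperm).
have Hc' : cycle e (x :: (p2 ++ p1)).
  by rewrite -(rot_cycle (size p1)) rot_size_cat in Hc.
have Hy' : y \in x :: (p2 ++ p1) by rewrite (perm_mem Hperm).
have Hn' : size (x :: (p2 ++ p1)) <= n.+1 by rewrite (perm_size Hperm).
have Ho' : odd (size (x :: (p2 ++ p1))) by rewrite (perm_size Hperm).
move: Hn' Ho' Hu' Hc' Hy'; clear Hn Ho Hu Hc Hy Hperm.
case: (p2 ++ p1) => [|b [|c r2]].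
- by move=> _ _ _ _; rewrite inE eq_sym (negbTE Hxy).
- by [].
move=> Hn Ho Hu Hc Hy.
have Hc0 := Hc.
move: Hc => /= /andP [exb /andP [ebc Hc]].
case: (boolP (e x c)) => exc; last first.
  exists ([:: x; b; c] :: pairs r2).
  move: (Hc); rewrite rcons_path => /andP [Hp _].
  have [F G] := pairs_ok sym irr (path_sorted Hp) ltac:(by move: Ho => /=; rewrite !negbK).
  rewrite /= F; split => // p; rewrite in_cons => /orP [/eqP -> | /G //].
  by split => //; apply: adj3.
move: Hn Ho Hu Hc Hy Hc0; case/lastP: r2 => [|r3 z].
  move=> _ _ _ _ Hy _; exfalso; move: Hy; rewrite !inE => /or3P [] /eqP Ey.
  - by rewrite Ey eqxx in Hxy.
  - by rewrite Ey exb in Hexy.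
  - by rewrite Ey exc in Hexy.
move=> Hn Ho Hu Hc Hy Hc0.
have ezx : e z x by move: Hc; rewrite rcons_path last_rcons => /andP [].
case: (boolP (e z b)) => ezb; last first.
  exists ([:: z; x; b] :: pairs (c :: r3)).
  move: (Hc); rewrite !rcons_path => /andP [/andP [Hp _] _].
  have [F G] := pairs_ok sym irr (s := c :: r3) Hp
    ltac:(by move: Ho => /=; rewrite size_rcons /= !negbK).
  split.
    by rewrite /= F; perm_tac.
  move=> p; rewrite in_cons => /orP [/eqP -> | /G //].
  by split => //; apply: adj3.
move: Hn Ho Hu Hc Hy Hc0; case: r3 => [|d t'].
  move=> _ _ _ _ Hy _; exfalso; move: Hy; rewrite /= !inE => /or4P [] /eqP Ey.
  - by rewrite Ey eqxx in Hxy.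
  - by rewrite Ey exb in Hexy.
  - by rewrite Ey exc in Hexy.
  - by rewrite Ey sym ezx in Hexy.
move=> Hn Ho Hu Hc Hy Hc0.
have Hyd : y \in d :: t'.
  move: Hy; rewrite /= !inE mem_rcons !inE.
  case: (y =P x) => [Ey|_]; first by rewrite Ey eqxx in Hxy.
  case: (y =P b) => [Ey|_]; first by rewrite Ey exb in Hexy.
  case: (y =P c) => [Ey|_]; first by rewrite Ey exc in Hexy.
  case: (y =P z) => [Ey|_]; first by rewrite Ey sym ezx in Hexy.
  by [].
move: Hc => /= /andP [ecd Hc].
case: (boolP (e x d)) => exd.
  have Hp : perm_eq (b :: c :: (x :: d :: rcons t' z)) (x :: b :: c :: rcons (d :: t') z)
    by perm_tac.
  have Hu' : uniq (x :: d :: rcons t' z).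
    by move: Hu; rewrite -(perm_uniq Hp) => /= /and3P [].
  have [P [HP HG]] := IH (x :: d :: rcons t' z)
    ltac:(move: Hn; rewrite /= !size_rcons; repeat match goal with H : _ |- _ => clear H end; lia)
    ltac:(by move: Ho; rewrite /= !size_rcons /= !negbK)
    Hu' ltac:(by rewrite /= exd) x y
    ltac:(by rewrite inE eqxx)
    ltac:(by move: Hyd; rewrite !inE mem_rcons !inE => /orP [-> | ->]; rewrite ?orbT)
    Hxy Hexy.
  exists ([:: b; c] :: P); split.
    by apply: perm_trans Hp; rewrite /= !perm_cons.
  move=> p; rewrite in_cons => /orP [/eqP -> | /HG //].
  by split => //; apply: adj2.
exists ([:: x; c; d] :: [:: b; z] :: pairs t').
move: (Hc); rewrite !rcons_path => /andP [/andP [Hp _] _].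
have [F G] := pairs_ok sym irr (path_sorted Hp)
  ltac:(by move: Ho; rewrite /= size_rcons /= !negbK).
split.
  by rewrite /= F; perm_tac.
move=> p; rewrite !in_cons => /or3P [/eqP -> | /eqP -> | /G //].
  by split => //; apply: adj3.
by split => //; apply: (adj2 sym irr); rewrite sym.
Qed.

Theorem mainTheorem3 (T : finType) (e : rel T) :
  simple_graph e -> hamiltonian e -> ~ complete_odd e -> has_IPD e.
Proof.
move=> [sym irr] [s [Hu Hall Hs Hc]] Hnc.
have Hcard : #|T| = size s.
  rewrite -(card_uniqP Hu); apply: eq_card => z; by rewrite Hall.
suff [P [Hp Hg]] : exists P, perm_eq (flatten P) s /\ good e P.
  exists P; split.
  - by rewrite (perm_uniq Hp).
  - by move=> z; rewrite (perm_mem Hp).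
  - move=> p Hp'; have [H1 H2] := Hg p Hp'; split => //; split => //.
    by apply: (flatten_uniq_mem _ Hp'); rewrite (perm_uniq Hp).
case: (boolP (odd (size s))) => Ho.
  case: (boolP [forall x, forall y, (x != y) ==> e x y]) => H.
    exfalso; apply: Hnc; split; last by rewrite Hcard.
    move=> x y nxy; move/forallP: H => /(_ x) /forallP /(_ y).
    by rewrite nxy.
  move/forallPn: H => [x /forallPn [y]]; rewrite negb_imply => /andP [nxy nexy].
  exact: (odd_main sym irr (leqnn (size s)) Ho Hu Hc (Hall x) (Hall y) nxy nexy).
have Hso : sorted e s.
  by move: Hc; case: s {Hu Hall Hs Hcard Ho} => //= a t; rewrite rcons_path => /andP [].
have [F G] := pairs_ok sym irr Hso Ho.
by exists (pairs s); rewrite F.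
Qed.
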